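(* Let $\kappa$ be an infinite cardinal and assume $\clubsuit^{\Diamond}_{\kappa^+}$. Then there exists a sequence $(B_\delta\mid\delta\in\lim(\kappa^+))$ such that for every limit ordinal $\delta<\kappa^+$, $B_\delta\subseteq\delta$ is a club (closed unbounded) subset of $\delta$, and for every club $C\subseteq\kappa^+$ there is a club $D\subseteq C$ of $\kappa^+$ such that the set $\{\delta\in\lim(\kappa^+)\mid D\cap\delta=B_\delta\}$ is stationary in $\kappa^+$.
   Context: $\lim(\kappa^+)$ denotes the set of limit ordinals below $\kappa^+$. For a regular uncountable cardinal $\lambda$, a superclub sequence for $\lambda$ is a sequence $(S_\alpha\mid\alpha<\lambda)$ with $S_\alpha\subseteq\alpha$ for each $\alpha$, such that for every $A\in[\lambda]^\lambda$ there is $B\in[A]^\lambda$ for which $\{\alpha<\lambda\mid B\cap\alpha=S_\alpha\}$ is stationary in $\lambda$. $\clubsuit^{\Diamond}_\lambda$ (superclub at $\lambda$) is the statement that a superclub sequence for $\lambda$ exists. (Since prediction happens on a stationary set, one may index a superclub sequence by limit ordinals only.) *)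

(* Defs.v *)
(* Ordinals below kappa^+ are modelled as the elements of an
   abstract well-ordered type (L, lt) whose order type is kappa^+, where the
   cardinal kappa is the cardinality of an infinite type K. *)
From Stdlib Require Import List.

Definition well_order {L : Type} (lt : L -> L -> Prop) : Prop :=
  (forall x, ~ lt x x) /\
  (forall x y z, lt x y -> lt y z -> lt x z) /\
  (forall x y, lt x y \/ x = y \/ lt y x) /\
  well_founded lt.

Definition infinite_type (K : Type) : Prop :=
  ~ exists l : list K, forall x : K, In x l.

Definition injective {A B : Type} (f : A -> B) : Prop :=
  forall x y, f x = f y -> x = y.

(* The order type of (L, lt) is |K|^+ : every proper initial segment has
   cardinality <= |K|, while L itself has cardinality > |K|. *)
Definition is_successor_of {L : Type} (lt : L -> L -> Prop) (K : Type) : Prop :=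
  (forall a : L, exists f : {x : L | lt x a} -> K, injective f) /\
  ~ (exists f : L -> K, injective f).

Section Ord.
Context {L : Type} (lt : L -> L -> Prop).

Definition is_limit (d : L) : Prop :=
  (exists x, lt x d) /\ (forall x, lt x d -> exists y, lt x y /\ lt y d).

Definition cofinal_below (S : L -> Prop) (g : L) : Prop :=
  forall x, lt x g -> exists y, S y /\ lt x y /\ lt y g.

Definition club_in (d : L) (S : L -> Prop) : Prop :=
  (forall x, S x -> lt x d) /\
  cofinal_below S d /\
  (forall g, lt g d -> is_limit g -> cofinal_below S g -> S g).

Definition club (S : L -> Prop) : Prop :=
  (forall x, exists y, S y /\ lt x y) /\
  (forall g, is_limit g -> cofinal_below S g -> S g).

Definition stationary (S : L -> Prop) : Prop :=
  forall C, club C -> exists x, C x /\ S x.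

Definition full_size (A : L -> Prop) : Prop :=
  exists f : L -> {x : L | A x}, injective f.

Definition trace_eq (B : L -> Prop) (a : L) (S : L -> Prop) : Prop :=
  forall x, (B x /\ lt x a) <-> S x.

Definition superclub_seq (S : L -> L -> Prop) : Prop :=
  (forall a x, S a x -> lt x a) /\
  forall A : L -> Prop, full_size A ->
    exists B : L -> Prop, (forall x, B x -> A x) /\ full_size B /\
      stationary (fun a => trace_eq B a (S a)).

Definition superclub : Prop := exists S, superclub_seq S.
End Ord.

(* Main.v *)
Require Import Defs.
From Stdlib Require Import Classical ClassicalEpsilon FunctionalExtensionality PropExtensionality ProofIrrelevance List Lia Arith Wellfounded.
Import ListNotations.

Definition inj (A B : Type) : Prop := exists f : A -> B, injective f.

Lemma inj_trans A B C : inj A B -> inj B C -> inj A C.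
Proof. intros [f Hf] [g Hg]. exists (fun x => g (f x)). intros x y H. apply Hf, Hg, H. Qed.

Lemma inj_refl A : inj A A.
Proof. exists (fun x => x). intros x y H; exact H. Qed.

Lemma inj_prod A B C D : inj A C -> inj B D -> inj (A*B) (C*D).
Proof. intros [f Hf] [g Hg]. exists (fun p => (f (fst p), g (snd p))).
  intros [a b] [c d] H. simpl in H. injection H as H1 H2. apply Hf in H1. apply Hg in H2. subst; reflexivity. Qed.

Definition Fin (T : Type) := exists l : list T, forall x, In x l.

Lemma pigeon T : inj nat T -> Fin T -> False.
Proof.
  intros [f Hf] [l Hl].
  assert (HN : NoDup (map f (seq 0 (S (length l))))).
  { apply NoDup_map_NoDup_ForallPairs. intros x y _ _ H; apply Hf, H. apply seq_NoDup. }
  assert (HI : incl (map f (seq 0 (S (length l)))) l) by (intros x _; apply Hl).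
  pose proof (NoDup_incl_length HN HI) as Hle.
  rewrite length_map, length_seq in Hle. lia.
Qed.

Fixpoint build (T : Type) (i : inhabited T) (n : nat) : list T :=
  match n with 0 => [] | S n => epsilon i (fun t => ~ In t (build T i n)) :: build T i n end.

Lemma notFin_nat T : ~ Fin T -> inj nat T.
Proof.
  intros HF.
  assert (i : inhabited T).
  { destruct (classic (inhabited T)) as [h|h]; [exact h|]. exfalso; apply HF. exists []. intros x; apply h; constructor; exact x. }
  pose (g := fun n => epsilon i (fun t => ~ In t (build T i n))).
  assert (Hg : forall n, ~ In (g n) (build T i n)).
  { intros n. unfold g. apply epsilon_spec. apply NNPP. intro H. apply HF. exists (build T i n). intros x. apply NNPP. intro H'. apply H. exists x. exact H'. }
  assert (Hin : forall m n, m < n -> In (g m) (build T i n)).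
  { intros m n; induction n; intros H. lia. simpl. destruct (Nat.eq_dec m n). subst. left. reflexivity. right. apply IHn. lia. }
  exists g. intros m n H.
  destruct (lt_eq_lt_dec m n) as [[h|h]|h]; auto.
  - exfalso. apply (Hg n). rewrite <- H. apply Hin, h.
  - exfalso. apply (Hg m). rewrite H. apply Hin, h.
Qed.

Definition shiftf {T} (f : nat -> T) (t : T) : T :=
  match excluded_middle_informative (exists n, f n = t) with
  | left H => f (S (proj1_sig (constructive_indefinite_description _ H)))
  | right _ => t end.

Lemma shiftf_spec {T} (f : nat -> T) t :
  (exists n, f n = t /\ shiftf f t = f (S n)) \/ ((~ exists n, f n = t) /\ shiftf f t = t).
Proof.
  unfold shiftf. destruct (excluded_middle_informative _) as [H|H].
  - left. destruct (constructive_indefinite_description _ H) as [n Hn]. simpl. exists n; auto.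
  - right; auto.
Qed.

Lemma opt_absorb T : inj nat T -> inj (option T) T.
Proof.
  intros [f Hf].
  exists (fun o => match o with None => f 0 | Some t => shiftf f t end).
  intros [a|] [b|] H; cbv beta iota in H.
  - f_equal. destruct (shiftf_spec f a) as [[n [Hn Ha]]|[Hn Ha]];
      destruct (shiftf_spec f b) as [[m [Hm Hb]]|[Hm Hb]]; rewrite Ha, Hb in H.
    + apply Hf in H. injection H as ->. congruence.
    + exfalso. apply Hm. exists (S n). exact H.
    + exfalso; apply Hn. exists (S m). symmetry; exact H.
    + exact H.
  - destruct (shiftf_spec f a) as [[n [Hn Ha]]|[Hn Ha]]; rewrite Ha in H.
    + apply Hf in H. discriminate.
    + exfalso; apply Hn; exists 0; symmetry; exact H.
  - destruct (shiftf_spec f b) as [[n [Hn Hb]]|[Hn Hb]]; rewrite Hb in H.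
    + apply Hf in H. discriminate.
    + exfalso; apply Hn; exists 0; exact H.
  - reflexivity.
Qed.

Definition compF T Y (R : T -> T -> Prop) (iY : inhabited Y) (t : T) (f : forall s, R s t -> Y) : Y :=
  epsilon iY (fun y => forall s (r : R s t), f s r <> y).
Definition compf T Y R (Rwf : well_founded R) iY : T -> Y := Fix Rwf (fun _ => Y) (compF T Y R iY).
Lemma compf_eq T Y R Rwf iY t : compf T Y R Rwf iY t =
   epsilon iY (fun y => forall s, R s t -> compf T Y R Rwf iY s <> y).
Proof.
  unfold compf at 1. rewrite Fix_eq.
  - reflexivity.
  - intros x f g H. unfold compF. f_equal. apply functional_extensionality; intro y.
    apply propositional_extensionality. split; intros H1 s r; [rewrite <- H | rewrite H]; apply H1.
Qed.

Lemma comp T Y (R : T -> T -> Prop) : well_founded R -> (forall s t, R s t \/ s = t \/ R t s) -> inhabited Y ->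
  inj T Y \/ exists t, inj Y {s | R s t}.
Proof.
  intros Rwf Rtot iY.
  pose (f := compf T Y R Rwf iY).
  destruct (classic (forall t, exists y, forall s, R s t -> f s <> y)) as [H|H].
  - left. exists f.
    assert (Hf : forall s t, R s t -> f s <> f t).
    { intros s t r. pose proof (epsilon_spec iY _ (H t)) as E.
      unfold f. rewrite (compf_eq _ _ _ _ _ t). apply E, r. }
    intros s t E. destruct (Rtot s t) as [h|[h|h]].
    + exfalso; apply (Hf s t h E).
    + exact h.
    + exfalso; apply (Hf t s h); symmetry; exact E.
  - right. apply not_all_ex_not in H. destruct H as [t Ht]. exists t.
    assert (H2 : forall y, exists s, R s t /\ f s = y).
    { intros y. apply NNPP; intro C. apply Ht. exists y. intros s r E. apply C. exists s; auto. }
    exists (fun y => exist _ (proj1_sig (constructive_indefinite_description _ (H2 y)))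
                          (proj1 (proj2_sig (constructive_indefinite_description _ (H2 y))))).
    intros y1 y2 E. apply (f_equal (@proj1_sig _ _)) in E. simpl in E.
    destruct (constructive_indefinite_description _ (H2 y1)) as [s1 [p1 e1]].
    destruct (constructive_indefinite_description _ (H2 y2)) as [s2 [p2 e2]].
    simpl in E. subst. reflexivity.
Qed.

Lemma wf_lex A B (RA : A->A->Prop) (RB : B->B->Prop) : well_founded RA -> well_founded RB ->
  well_founded (fun p q => RA (fst p) (fst q) \/ (fst p = fst q /\ RB (snd p) (snd q))).
Proof.
  intros HA HB [a b]. revert b. induction (HA a) as [a _ IHa]. intros b.
  induction (HB b) as [b _ IHb]. constructor. intros [a' b'] [H|[H1 H2]]; simpl in *.
  - apply IHa, H.
  - subst a'. apply IHb, H2.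
Qed.

Lemma wf_min A (R : A->A->Prop) : well_founded R -> forall P, (exists x, P x) -> exists m, P m /\ forall y, R y m -> ~ P y.
Proof.
  intros wf P [x Hx]. revert Hx. induction (wf x) as [x _ IH]. intros Hx.
  destruct (classic (exists y, R y x /\ P y)) as [[y [Hy1 Hy2]]|H].
  - apply (IH y Hy1 Hy2).
  - exists x. split; auto. intros y r Py. apply H; eauto.
Qed.

Definition mx {L} (lt : L -> L -> Prop) (x y : L) : L :=
  if excluded_middle_informative (lt x y) then y else x.
Definition le {L} (lt : L -> L -> Prop) x y := lt x y \/ x = y.

Lemma mx_ge1 {L} (lt : L -> L -> Prop) x y : le lt x (mx lt x y).
Proof. unfold mx, le. destruct (excluded_middle_informative (lt x y)); auto. Qed.
Lemma mx_ge2 {L} (lt : L -> L -> Prop) : well_order lt -> forall x y, le lt y (mx lt x y).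
Proof. intros (irr & tr & tot & wf) x y. unfold mx, le. destruct (excluded_middle_informative (lt x y)); auto.
  destruct (tot x y) as [h|[h|h]]; auto. contradiction. Qed.
Lemma mx_cases {L} (lt : L -> L -> Prop) x y : mx lt x y = x \/ mx lt x y = y.
Proof. unfold mx. destruct (excluded_middle_informative (lt x y)); auto. Qed.
Lemma le_trans {L} (lt : L -> L -> Prop) : well_order lt -> forall x y z, le lt x y -> le lt y z -> le lt x z.
Proof. intros (irr & tr & tot & wf) x y z [h|h] [k|k]; subst; unfold le; eauto. Qed.

Definition opt_of {L} (lt : L->L->Prop) (m z : L) : option {y | lt y m} :=
  match excluded_middle_informative (lt z m) with left h => Some (exist _ z h) | right _ => None end.
Lemma opt_of_inj {L} (lt : L->L->Prop) m z z' : le lt z m -> le lt z' m -> opt_of lt m z = opt_of lt m z' -> z = z'.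
Proof.
  unfold opt_of. intros H1 H2.
  destruct (excluded_middle_informative (lt z m)); destruct (excluded_middle_informative (lt z' m)); intros E; try discriminate.
  - injection E as E. exact E.
  - destruct H1; [contradiction|]; destruct H2; [contradiction|]. congruence.
Qed.

Lemma sig_eq {A} (P : A -> Prop) (x y : {a | P a}) : proj1_sig x = proj1_sig y -> x = y.
Proof. destruct x as [x hx], y as [y hy]. simpl. intros ->. f_equal. apply proof_irrelevance. Qed.

Lemma fin_opt2 T : Fin T -> Fin (option T * option T).
Proof.
  intros [l Hl]. exists (list_prod (None :: map Some l) (None :: map Some l)).
  assert (H : forall o : option T, In o (None :: map Some l)).
  { intros [t|]; [right; apply in_map, Hl | left; reflexivity]. }
  intros [a b]. apply in_prod; apply H.
Qed.

Lemma hess {L} (lt : L->L->Prop) : well_order lt -> forall a, inj nat {y | lt y a} ->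
  inj ({y|lt y a} * {y|lt y a}) {y|lt y a}.
Proof.
  intros Hwo. pose proof Hwo as (irr & tr & tot & wf).
  intros a; induction (wf a) as [a _ IH]. intros Hn.
  set (Wa := {y | lt y a}).
  pose (LEX := fun p q : L * (L * L) => lt (fst p) (fst q) \/ (fst p = fst q /\
        (fun p q : L * L => lt (fst p) (fst q) \/ (fst p = fst q /\ lt (snd p) (snd q))) (snd p) (snd q))).
  pose (key := fun p : Wa * Wa => (mx lt (proj1_sig (fst p)) (proj1_sig (snd p)), (proj1_sig (fst p), proj1_sig (snd p)))).
  pose (R := fun p q => LEX (key p) (key q)).
  assert (Rwf : well_founded R).
  { apply (wf_inverse_image _ _ LEX key). exact (wf_lex _ _ _ _ wf (wf_lex _ _ _ _ wf wf)). }
  assert (Rtot : forall s t, R s t \/ s = t \/ R t s).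
  { intros [[x hx] [y hy]] [[x' hx'] [y' hy']]. unfold R, LEX, key; simpl.
    destruct (tot (mx lt x y) (mx lt x' y')) as [h|[h|h]]; [left; left; exact h| |right; right; left; exact h].
    destruct (tot x x') as [h2|[h2|h2]]; [left; right; split; auto| |right; right; right; split; auto].
    destruct (tot y y') as [h3|[h3|h3]]; [left; right; split; auto| |right; right; right; split; auto].
    subst x' y'. right; left. f_equal; f_equal; apply proof_irrelevance. }
  assert (iW : inhabited Wa) by (destruct Hn as [f _]; constructor; exact (f 0)).
  destruct (comp _ _ R Rwf Rtot iW) as [H|[p Hp]]; [exact H|].
  destruct p as [[x hx] [y hy]].
  set (m := mx lt x y).
  assert (hm : lt m a) by (destruct (mx_cases lt x y) as [e|e]; unfold m; rewrite e; auto).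
  assert (Hb : inj {s | R s (exist _ x hx, exist _ y hy)} (option {z | lt z m} * option {z | lt z m})).
  { exists (fun s => (opt_of lt m (proj1_sig (fst (proj1_sig s))), opt_of lt m (proj1_sig (snd (proj1_sig s))))).
    assert (Hle : forall s, R s (exist _ x hx, exist _ y hy) -> le lt (proj1_sig (fst s)) m /\ le lt (proj1_sig (snd s)) m).
    { intros [[x1 h1] [y1 k1]] r. unfold R, LEX, key in r; simpl in r |- *.
      assert (le lt (mx lt x1 y1) m) by (destruct r as [r|[r _]]; [left; exact r| right; exact r]).
      split; eapply le_trans; eauto; [apply mx_ge1 | apply mx_ge2; exact Hwo]. }
    intros [[[x1 h1] [y1 k1]] r1] [[[x2 h2] [y2 k2]] r2] E. simpl in E. injection E as E1 E2.
    destruct (Hle _ r1) as [a1 b1]. destruct (Hle _ r2) as [a2 b2]. simpl in *.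
    apply opt_of_inj in E1; auto. apply opt_of_inj in E2; auto. subst x2 y2.
    assert (h1 = h2) by apply proof_irrelevance. subst h2.
    assert (k1 = k2) by apply proof_irrelevance. subst k2.
    f_equal. apply proof_irrelevance. }
  assert (Hincl : inj {z | lt z m} Wa).
  { exists (fun z => exist _ (proj1_sig z) (tr _ _ _ (proj2_sig z) hm) : Wa).
    intros u v E. apply sig_eq. apply (f_equal (@proj1_sig _ _)) in E. exact E. }
  destruct (classic (inj nat {z | lt z m})) as [Hm|Hm].
  - pose proof (IH m hm Hm) as IHm.
    assert (HWm : inj Wa {z | lt z m}).
    { eapply inj_trans; [exact Hp|]. eapply inj_trans; [exact Hb|].
      eapply inj_trans; [apply inj_prod; apply opt_absorb; exact Hm|]. exact IHm. }
    eapply inj_trans; [apply inj_prod; exact HWm|]. eapply inj_trans; [exact IHm|]. exact Hincl.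
  - exfalso. assert (Hf : Fin {z | lt z m}).
    { apply NNPP. intro C. apply Hm, notFin_nat, C. }
    apply (pigeon _ (inj_trans _ _ _ Hn (inj_trans _ _ _ Hp Hb)) (fin_opt2 _ Hf)).
Qed.

Lemma KK (K L : Type) (lt : L -> L -> Prop) : infinite_type K -> well_order lt -> is_successor_of lt K ->
  inj (K * K) K.
Proof.
  intros HK Hwo [Hs1 Hs2]. pose proof Hwo as (irr & tr & tot & wf).
  assert (HnK : inj nat K) by (apply notFin_nat; exact HK).
  assert (iK : inhabited K) by (destruct HnK as [f _]; constructor; exact (f 0)).
  destruct (comp L K lt wf tot iK) as [H|[t Ht]]; [exfalso; exact (Hs2 H)|].
  assert (Hn : inj nat {s | lt s t}) by (eapply inj_trans; eauto).
  pose proof (hess lt Hwo t Hn) as Hh.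
  eapply inj_trans; [apply inj_prod; exact Ht|]. eapply inj_trans; [exact Hh|]. exact (Hs1 t).
Qed.

Lemma reg (K L : Type) (lt : L -> L -> Prop) : infinite_type K -> well_order lt -> is_successor_of lt K ->
  forall X : L -> Prop, (forall x, exists y, X y /\ lt x y) -> inj L {x | X x}.
Proof.
  intros HK Hwo Hs X HX. pose proof (KK K L lt HK Hwo Hs) as HKK.
  destruct Hs as [Hs1 Hs2]. pose proof Hwo as (irr & tr & tot & wf).
  assert (HnK : inj nat K) by (apply notFin_nat; exact HK).
  destruct HnK as [kf _]. pose (k0 := kf 0).
  destruct (classic (inhabited L)) as [iL|nL].
  2:{ exists (fun x => False_rect _ (nL (inhabits x))). intros x; exfalso; apply nL; constructor; exact x. }
  assert (iX : inhabited {x | X x}).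
  { destruct iL as [l]. destruct (HX l) as [y [Hy _]]. constructor. exact (exist _ y Hy). }
  destruct (comp L _ lt wf tot iX) as [H|[t Ht]]; [exact H|].
  exfalso. apply Hs2.
  assert (Hi : exists i : L -> L -> K, forall c w w', lt w c -> lt w' c -> i c w = i c w' -> w = w').
  { exists (fun c w => match excluded_middle_informative (lt w c) with
       | left h => proj1_sig (constructive_indefinite_description _ (Hs1 c)) (exist _ w h)
       | right _ => k0 end).
    intros c w w' hw hw'.
    destruct (constructive_indefinite_description _ (Hs1 c)) as [g Hg]. simpl.
    destruct (excluded_middle_informative (lt w c)) as [h|h]; [|contradiction].
    destruct (excluded_middle_informative (lt w' c)) as [h'|h']; [|contradiction].
    intros E. apply Hg in E. apply (f_equal (@proj1_sig _ _)) in E. exact E. }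
  destruct Hi as [i Hi].
  assert (HLX : inj L ({x | X x} * K)).
  { exists (fun w => let s := constructive_indefinite_description _ (HX w) in
       (exist X (proj1_sig s) (proj1 (proj2_sig s)), i (proj1_sig s) w)).
    intros w w' E. simpl in E.
    destruct (constructive_indefinite_description _ (HX w)) as [c [Xc hc]].
    destruct (constructive_indefinite_description _ (HX w')) as [c' [Xc' hc']].
    simpl in E. injection E as E1 E2. subst c'. eapply Hi; eauto. }
  change (inj L K).
  eapply inj_trans; [exact HLX|]. eapply inj_trans; [|exact HKK].
  apply inj_prod; [|apply inj_refl]. eapply inj_trans; [exact Ht|]. exact (Hs1 t).
Qed.

Lemma small (K L : Type) (lt : L -> L -> Prop) : infinite_type K -> well_order lt -> is_successor_of lt K ->
  forall a, inj {y | ~ lt a y} K.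
Proof.
  intros HK Hwo [Hs1 Hs2] a. pose proof Hwo as (irr & tr & tot & wf).
  assert (HnK : inj nat K) by (apply notFin_nat; exact HK).
  eapply inj_trans; [|apply opt_absorb, HnK].
  destruct (Hs1 a) as [g Hg].
  exists (fun y => match opt_of lt a (proj1_sig y) with Some z => Some (g z) | None => None end).
  intros [y hy] [y' hy'] E. apply sig_eq. simpl in E.
  assert (Hl : forall z, ~ lt a z -> le lt z a) by (intros z hz; destruct (tot z a) as [h|[h|h]]; [left|right|]; auto; contradiction).
  simpl. apply (opt_of_inj lt a y y'); [apply Hl; auto| apply Hl; auto|].
  destruct (opt_of lt a y); destruct (opt_of lt a y'); try discriminate; auto.
  injection E as E. apply Hg in E. subst; reflexivity.
Qed.

Lemma unb_full (K L : Type) (lt : L -> L -> Prop) : infinite_type K -> well_order lt -> is_successor_of lt K ->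
  forall A, full_size A -> forall x, exists y, A y /\ lt x y.
Proof.
  intros HK Hwo Hs A HA x. apply NNPP; intro C.
  destruct Hs as [Hs1 Hs2]. apply Hs2.
  change (inj L K). eapply inj_trans; [exact HA|]. eapply inj_trans; [|exact (small K L lt HK Hwo (conj Hs1 Hs2) x)].
  exists (fun y => exist (fun y => ~ lt x y) (proj1_sig y) (fun h => C (ex_intro _ (proj1_sig y) (conj (proj2_sig y) h)))).
  intros u v E. apply sig_eq. apply (f_equal (@proj1_sig _ _)) in E. exact E.
Qed.

Lemma no_max (K L : Type) (lt : L -> L -> Prop) : infinite_type K -> well_order lt -> is_successor_of lt K ->
  forall x, exists y, lt x y.
Proof.
  intros HK Hwo Hs x. destruct (unb_full K L lt HK Hwo Hs (fun _ => True)) with (x := x) as [y [_ h]]; eauto.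
  exists (fun x => exist _ x I). intros u v E. apply (f_equal (@proj1_sig _ _)) in E. exact E.
Qed.

Lemma cbound (K L : Type) (lt : L -> L -> Prop) : infinite_type K -> well_order lt -> is_successor_of lt K ->
  forall s : nat -> L, exists u, forall n, lt (s n) u.
Proof.
  intros HK Hwo Hs s. pose proof Hwo as (irr & tr & tot & wf).
  apply NNPP; intro H.
  assert (HX : forall x, exists y, (exists n, s n = y) /\ lt x y).
  { intros x. destruct (no_max K L lt HK Hwo Hs x) as [y hy].
    assert (exists n, ~ lt (s n) y) as [n hn].
    { apply NNPP; intro C. apply H. exists y. intros n. apply NNPP; intro D. apply C; eauto. }
    exists (s n). split; eauto. destruct (tot (s n) y) as [h|[h|h]]; [contradiction| subst; auto | eauto]. }
  pose proof (reg K L lt HK Hwo Hs _ HX) as HL.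
  destruct Hs as [Hs1 Hs2]. apply Hs2. change (inj L K).
  eapply inj_trans; [exact HL|]. eapply inj_trans; [|apply notFin_nat; exact HK].
  exists (fun y : {x : L | exists n, s n = x} => proj1_sig (constructive_indefinite_description (fun n => s n = proj1_sig y) (proj2_sig y))).
  intros [y hy] [y' hy'] E. simpl in E.
  destruct (constructive_indefinite_description _ hy) as [n en].
  destruct (constructive_indefinite_description _ hy') as [n' en']. simpl in E. subst.
  apply sig_eq. reflexivity.
Qed.

Lemma interleave (K L : Type) (lt : L -> L -> Prop) : infinite_type K -> well_order lt -> is_successor_of lt K ->
  forall E U : L -> Prop, club lt E -> (forall x, exists y, U y /\ lt x y) ->
  forall x, exists d, lt x d /\ E d /\ is_limit lt d /\ cofinal_below lt U d.
Proof.
  intros HK Hwo Hs E U [HE1 HE2] HU x. pose proof Hwo as (irr & tr & tot & wf).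
  pose (e := fun z => proj1_sig (constructive_indefinite_description _ (HE1 z))).
  assert (He : forall z, E (e z) /\ lt z (e z)) by (intros z; unfold e; destruct (constructive_indefinite_description _ (HE1 z)); simpl; tauto).
  pose (b := fun z => proj1_sig (constructive_indefinite_description _ (HU z))).
  assert (Hb : forall z, U (b z) /\ lt z (b z)) by (intros z; unfold b; destruct (constructive_indefinite_description _ (HU z)); simpl; tauto).
  pose (a := fun n => nat_rect (fun _ => L) x (fun _ z => b (e z)) n).
  assert (Ha : forall n, a (S n) = b (e (a n))) by reflexivity.
  assert (H1 : forall n, lt (a n) (e (a n))) by (intros n; apply He).
  assert (H2 : forall n, lt (e (a n)) (a (S n))) by (intros n; rewrite Ha; apply Hb).
  destruct (cbound K L lt HK Hwo Hs a) as [u Hu].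
  destruct (wf_min L lt wf (fun u => forall n, lt (a n) u) (ex_intro _ u Hu)) as [d [Hd Hmin]].
  assert (Hbelow : forall y, lt y d -> exists n, le lt y (a n)).
  { intros y hy. pose proof (Hmin y hy) as C. apply NNPP; intro D. apply C. intros n.
    destruct (tot (a n) y) as [h|[h|h]]; auto; exfalso; apply D; exists n; [right; auto | left; auto]. }
  assert (Hle : forall y z w, le lt y z -> lt z w -> lt y w) by (intros y z w [h|h] h'; subst; eauto).
  assert (HcofE : cofinal_below lt E d).
  { intros y hy. destruct (Hbelow y hy) as [n hn]. exists (e (a n)). split; [apply He|]. split; eauto. }
  exists d. split; [exact (Hd 0)|]. split; [apply HE2|]. 3: split.
  - split; [exists x; exact (Hd 0)|]. intros y hy. destruct (Hbelow y hy) as [n hn]. exists (a (S n)). split; eauto.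
  - exact HcofE.
  - split; [exists x; exact (Hd 0)|]. intros y hy. destruct (Hbelow y hy) as [n hn]. exists (a (S n)). split; eauto.
  - intros y hy. destruct (Hbelow y hy) as [n hn]. exists (a (S n)). split; [rewrite Ha; apply Hb|]. split; eauto.
Qed.

Theorem lemma2p1 (K : Type) (L : Type) (lt : L -> L -> Prop)
  (HK : infinite_type K) (Hwo : well_order lt) (Hsucc : is_successor_of lt K)
  (Hclub : superclub lt) :
  exists B : L -> L -> Prop,
    (forall d, is_limit lt d -> club_in lt d (B d)) /\
    (forall C : L -> Prop, club lt C ->
       exists D : L -> Prop, (forall x, D x -> C x) /\ club lt D /\
         stationary lt (fun d => is_limit lt d /\ trace_eq lt D d (B d))).
Proof.
  pose proof Hwo as (irr & tr & tot & wf).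
  destruct Hclub as [S [HS1 HS2]].
  pose (cl := fun d x => lt x d /\ (S d x \/ (is_limit lt x /\ cofinal_below lt (S d) x))).
  exists (fun d x => (cofinal_below lt (S d) d /\ cl d x) \/ (~ cofinal_below lt (S d) d /\ lt x d)).
  split.
  - intros d Hd. destruct (classic (cofinal_below lt (S d) d)) as [Hc|Hc].
    + split; [|split].
      * intros x [[_ [h _]]|[_ h]]; exact h.
      * intros x hx. destruct (Hc x hx) as [y [Sy [h1 h2]]]. exists y. split; [left; split; [exact Hc|]|]; unfold cl; auto.
      * intros g hg Hg Hcof. left. split; [exact Hc|]. split; [exact hg|]. right. split; [exact Hg|].
        intros x hx. destruct (Hcof x hx) as [y [[[_ [hy [Sy|[_ Cy]]]]|[Hn _]] [h1 h2]]]; [| |contradiction].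
        -- exists y; auto.
        -- destruct (Cy x h1) as [z [Sz [k1 k2]]]. exists z. split; [exact Sz|]. split; eauto.
    + split; [|split].
      * intros x [[_ [h _]]|[_ h]]; exact h.
      * intros x hx. destruct Hd as [_ Hd]. destruct (Hd x hx) as [y [h1 h2]]. exists y. auto.
      * intros g hg _ _. right. auto.
  - intros C [HC1 HC2].
    assert (HCf : full_size C) by (apply (reg K L lt HK Hwo Hsucc C HC1)).
    destruct (HS2 C HCf) as [B0 [HB0C [HB0f HB0s]]].
    pose proof (unb_full K L lt HK Hwo Hsucc B0 HB0f) as HB0u.
    exists (fun x => B0 x \/ (is_limit lt x /\ cofinal_below lt B0 x)).
    assert (HcofB : forall g, cofinal_below lt (fun x => B0 x \/ (is_limit lt x /\ cofinal_below lt B0 x)) g -> cofinal_below lt B0 g).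
    { intros g Hg y hy. destruct (Hg y hy) as [z [[Bz|[_ Cz]] [h1 h2]]].
      - exists z; auto.
      - destruct (Cz y h1) as [w [Bw [k1 k2]]]. exists w. split; [exact Bw|]. split; eauto. }
    split; [|split].
    + intros x [Bx|[Lx Cx]]; [apply HB0C, Bx|]. apply HC2; [exact Lx|].
      intros y hy. destruct (Cx y hy) as [z [Bz h]]. exists z. split; [apply HB0C, Bz| exact h].
    + split.
      * intros x. destruct (HB0u x) as [y [By h]]. exists y. auto.
      * intros g Lg Hg. right. split; [exact Lg|]. apply HcofB, Hg.
    + intros E HE.
      assert (HE2 : club lt (fun d => E d /\ is_limit lt d /\ cofinal_below lt B0 d)).
      { split.
        - intros x. destruct (interleave K L lt HK Hwo Hsucc E B0 HE HB0u x) as [d [h1 [h2 [h3 h4]]]].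
          exists d; auto.
        - intros g Lg Hg. split; [|split; [exact Lg|]].
          + apply (proj2 HE g Lg). intros y hy. destruct (Hg y hy) as [z [[Ez _] h]]. exists z; auto.
          + intros y hy. destruct (Hg y hy) as [z [[_ [_ Cz]] [h1 h2]]].
            destruct (Cz y h1) as [w [Bw [k1 k2]]]. exists w. split; [exact Bw|]. split; eauto. }
      destruct (HB0s _ HE2) as [x [[Ex [Lx Cx]] Tx]].
      exists x. split; [exact Ex|]. split; [exact Lx|].
      assert (HSc : cofinal_below lt (S x) x).
      { intros y hy. destruct (Cx y hy) as [z [Bz [h1 h2]]]. exists z. split; [apply Tx; auto|]. auto. }
      intros y. split.
      * intros [[By|[Ly Cy]] hy]; left; split; auto; split; auto.
        -- left. apply Tx; auto.
        -- right. split; [exact Ly|]. intros z hz. destruct (Cy z hz) as [w [Bw [k1 k2]]].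
           exists w. split; [apply Tx; split; eauto|]. auto.
      * intros [[_ [hy [Sy|[Ly Cy]]]]|[Hn _]]; [| |contradiction].
        -- split; [left; apply Tx, Sy| exact hy].
        -- split; [|exact hy]. right. split; [exact Ly|]. intros z hz. destruct (Cy z hz) as [w [Sw [k1 k2]]].
           exists w. split; [apply (proj2 (Tx w)) in Sw; apply Sw|]. auto.
Qed.
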